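(* Under the GoRank setting described in the context, for every node $k\in[n]$ and every iteration $t\ge 1$, $$\mathbb{E}[R'_k(t)] = \frac{1}{t}\sum_{s=0}^{t-1} \mathbf{h}_k^\top \mathbf{W}_1^{\,s}\, \mathbf{e}_k, \qquad \mathbb{E}[R_k(t)] = n\,\mathbb{E}[R'_k(t)]+1,$$ where $\mathbf{h}_k=(\mathbb{I}_{\{X_k>X_1\}},\dots,\mathbb{I}_{\{X_k>X_n\}})^\top$, $\mathbf{W}_1=\mathbf{I}_n-\frac{1}{|E|}\mathbf{L}$, and $\mathbf{e}_k$ is the $k$-th canonical basis vector of $\mathbb{R}^n$.
   Context: Let $n\ge 2$ and let $\mathcal G=(V,E)$ be a connected, non-bipartite, undirected graph with vertex set $V=[n]=\{1,\dots,n\}$; $\mathbf{A}$ is its adjacency matrix, $\mathbf{D}$ the diagonal degree matrix and $\mathbf{L}=\mathbf{D}-\mathbf{A}$ its Laplacian. Node $k$ holds a real observation $X_k$, and the $X_k$ are pairwise distinct. Algorithm GoRank: initialize $Y_k(0)=X_k$ and $R'_k(0)=0$ for all $k$. At each iteration $s=1,2,\dots$: (i) every node $k$ sets $R'_k(s)=(1-1/s)R'_k(s-1)+(1/s)\,\mathbb{I}_{\{X_k>Y_k(s-1)\}}$ and $R_k(s)=nR'_k(s)+1$; (ii) an edge $(i,j)\in E$ is drawn uniformly at random from $E$, independently of everything before; (iii) the auxiliary values are swapped: $Y_i(s)=Y_j(s-1)$, $Y_j(s)=Y_i(s-1)$, and $Y_l(s)=Y_l(s-1)$ for $l\notin\{i,j\}$.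 Expectations are over the random edge sampling. *)

(* Defs.v *)
From HB Require Import structures.
From mathcomp Require Import all_boot all_order all_algebra.
From mathcomp Require Import fingroup perm.
Set Implicit Arguments. Unset Strict Implicit. Unset Printing Implicit Defensive.
Import Order.TTheory GRing.Theory Num.Theory.
Local Open Scope ring_scope.

Section GoRank.
Variables (R : realFieldType) (n : nat) (adj : rel 'I_n).

Definition simple_graph := symmetric adj /\ irreflexive adj.
Definition connected_graph := forall i j : 'I_n, connect adj i j.
Definition bipartite := exists c : 'I_n -> bool,
  forall i j, adj i j -> c i != c j.

(* Edge set: each undirected edge {i,j} represented once, as (i,j) with i < j. *)
Definition edges : {set 'I_n * 'I_n} :=
  [set p : 'I_n * 'I_n | (nat_of_ord p.1 < nat_of_ord p.2)%N && adj p.1 p.2].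

Definition adjmx : 'M[R]_n := \matrix_(i, j) (adj i j)%:R.
Definition degmx : 'M[R]_n := \matrix_(i, j) ((i == j)%:R * #|[set l | adj i l]|%:R).
Definition laplacian : 'M[R]_n := degmx - adjmx.
Definition W1 : 'M[R]_n := 1%:M - (#|edges|%:R)^-1 *: laplacian.

Definition swapY (Y : 'I_n -> R) (e : 'I_n * 'I_n) : 'I_n -> R :=
  fun l => Y (tperm e.1 e.2 l).
Definition Yaux (X : 'I_n -> R) (ws : seq ('I_n * 'I_n)) : 'I_n -> R :=
  foldl swapY X ws.

(* R'_k(s), where ws is the sequence of drawn edges (edge s+1 is ws`_s). *)
Fixpoint Rprime (X : 'I_n -> R) (ws : seq ('I_n * 'I_n)) (k : 'I_n) (s : nat) : R :=
  match s with
  | 0 => 0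
  | s'.+1 => (1 - (s'.+1%:R)^-1) * Rprime X ws k s'
             + (s'.+1%:R)^-1 * ((Yaux X (take s' ws) k < X k)%R)%:R
  end.
Definition Rrank X ws k s : R := n%:R * Rprime X ws k s + 1.

(* Expectation over t i.i.d. uniform edge draws from [edges]. *)
Definition expect (t : nat) (f : seq ('I_n * 'I_n) -> R) : R :=
  (#|edges|%:R ^+ t)^-1 *
  \sum_(w : t.-tuple ('I_n * 'I_n) | all (fun e => e \in edges) w) f w.

Definition hvec (X : 'I_n -> R) (k : 'I_n) : 'rV[R]_n := \row_j ((X j < X k)%R)%:R.
Definition evec (k : 'I_n) : 'cV[R]_n := delta_mx k 0.

End GoRank.

(* Main.v *)
Require Import Defs.
From HB Require Import structures.
From mathcomp Require Import all_boot all_order all_algebra.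
From mathcomp Require Import fingroup perm ring lra.
Import Order.TTheory GRing.Theory Num.Theory.
Local Open Scope ring_scope.

Lemma sum_tuple_cons (R : realFieldType) (T : finType) m (P : pred T)
  (F : m.+1.-tuple T -> R) :
  \sum_(w : m.+1.-tuple T | all P w) F w =
  \sum_(e | P e) \sum_(w : m.-tuple T | all P w) F [tuple of e :: w].
Proof.
rewrite pair_big_dep /=.
rewrite (reindex (fun w : m.+1.-tuple T => (thead w, [tuple of behead w]))) /=.
  apply: eq_big => w. by rewrite {1}(tuple_eta w). by move=> _; rewrite -tuple_eta.
exists (fun p : T * m.-tuple T => [tuple of p.1 :: p.2]) => /=.
  by move=> w _; rewrite -tuple_eta.
by move=> [e w] _ /=; rewrite theadE; congr pair; apply: val_inj.
Qed.
Lemma edge_sum (R : realFieldType) n (adj : rel 'I_n) (f : 'I_n -> R) i :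
  symmetric adj ->
  \sum_(e in edges adj) f (tperm e.1 e.2 i) =
  #|edges adj|%:R * f i + \sum_j (adj i j)%:R * (f j - f i).
Proof.
move=> sym.
have -> : \sum_(e in edges adj) f (tperm e.1 e.2 i) =
   \sum_(e in edges adj) (f i + (f (tperm e.1 e.2 i) - f i)).
  by apply: eq_bigr => e _; rewrite addrC subrK.
rewrite big_split /= sumr_const -mulr_natl; congr (_ + _); first by rewrite mulr1 mulr_natl.
rewrite big_mkcond /=.
have -> : \sum_(p : 'I_n * 'I_n) (if p \in edges adj then f (tperm p.1 p.2 i) - f i else 0)
  = \sum_(a : 'I_n) \sum_(b : 'I_n) (if (a, b) \in edges adj then f (tperm a b i) - f i else 0).
  by rewrite pair_bigA; apply: eq_bigr => -[a b].
have step : forall a b : 'I_n,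
  (if (a, b) \in edges adj then f (tperm a b i) - f i else 0) =
  (if ((a < b)%N && adj a b) && (a == i) then f b - f i else 0) +
  (if ((a < b)%N && adj a b) && (b == i) then f a - f i else 0).
  move=> a b; rewrite inE /=.
  case: ifP => [/andP[ab adjab]|_]; last by rewrite addr0.
  have nab : a != b by rewrite neq_ltn ab.
  have [eai|ai] := eqVneq a i; have [ebi|bi] := eqVneq b i.
  - by rewrite eai ebi eqxx in nab.
  - by rewrite -eai tpermL addr0.
  - by rewrite -ebi tpermR add0r.
  - by rewrite tpermD // ?subrr ?addr0 // eq_sym.
rewrite (eq_bigr _ (fun a _ => eq_bigr _ (fun b _ => step a b))).
rewrite (eq_bigr _ (fun a _ => big_split _ _ _ _ _)) /=.
rewrite big_split /= [X in _ + X = _]exchange_big /=.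
rewrite (bigD1 i) //= [X in _ + X + _ = _]big1 ?addr0; last first.
  move=> a ai; apply: big1 => b _; by rewrite (negbTE ai) andbF.
rewrite [X in _ + X = _](bigD1 i) //= [X in _ + (_ + X) = _]big1 ?addr0; last first.
  move=> b bi; apply: big1 => a _; by rewrite (negbTE bi) andbF.
rewrite -big_split /=; apply: eq_bigr => j _.
rewrite !eqxx !andbT (sym j i).
case: (ltngtP i j) => [ij|ji|/val_inj ->] /=.
- by rewrite addr0; case: (adj i j); rewrite ?mul1r ?mul0r.
- by rewrite add0r; case: (adj i j); rewrite ?mul1r ?mul0r.
- by rewrite subrr mulr0 addr0.
Qed.
Lemma W1_sum (R : realFieldType) n (adj : rel 'I_n) (f : 'I_n -> R) i :
  symmetric adj -> (#|edges adj|%:R : R) != 0 ->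
  \sum_j ((#|edges adj|%:R : R) *: W1 R adj) j i * f j =
  #|edges adj|%:R * f i + \sum_j (adj i j)%:R * (f j - f i).
Proof.
move=> sym E0.
have deg : (#|[set l | adj i l]|%:R : R) = \sum_j (adj i j)%:R.
  rewrite -sum1_card natr_sum big_mkcond /=; apply: eq_bigr => j _.
  by rewrite inE; case: (adj i j).
have -> : \sum_j ((#|edges adj|%:R : R) *: W1 R adj) j i * f j =
  \sum_j ((j == i)%:R * (#|edges adj|%:R * f i - #|[set l | adj i l]|%:R * f i)
          + (adj i j)%:R * f j).
  apply: eq_bigr => j _.
  rewrite /W1 /laplacian /degmx /adjmx !mxE sym.
  have [->|ji] := eqVneq j i.
    change (true%:R : R) with (1 : R); rewrite !mul1r; field; exact: E0.
  change (false%:R : R) with (0 : R).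
  rewrite !mul0r add0r; field; exact: E0.
rewrite big_split /= (bigD1 i) //= eqxx mul1r big1 ?addr0; last first.
  by move=> j /negbTE ->; rewrite mul0r.
rewrite deg.
rewrite -addrA; congr (_ + _).
rewrite mulr_suml addrC -sumrB; apply: eq_bigr => j _; by rewrite mulrBr.
Qed.
Lemma marg (R : realFieldType) n (adj : rel 'I_n) (phi : R -> R) (k : 'I_n) :
  symmetric adj -> (#|edges adj|%:R : R) != 0 ->
  forall t s (g : 'I_n -> R), (s <= t)%N ->
  \sum_(w : t.-tuple ('I_n * 'I_n) | all (fun e => e \in edges adj) w)
      phi (Yaux g (take s w) k) =
  (#|edges adj|%:R)^+(t - s) *
     \sum_i ((((#|edges adj|%:R : R) *: W1 R adj) ^+ s) i k * phi (g i)).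
Proof.
move=> sym E0; elim=> [|t IH] s g.
  rewrite leqn0 => /eqP ->; rewrite subnn expr0 mul1r expr0.
  rewrite (big_pred1 [tuple]); last by move=> w; rewrite (tuple0 w) /= eqxx.
  rewrite take0 /= (bigD1 k) //= mxE eqxx mul1r big1 ?addr0 //.
  by move=> i /negbTE ik; rewrite mxE ik mul0r.
case: s => [|s] Hs.
  rewrite sum_tuple_cons.
  have IH0 := IH 0%N g isT.
  rewrite (eq_bigr (fun w => phi (Yaux g [::] k))) in IH0; last by move=> w _; rewrite take0.
  rewrite (eq_bigr (fun e => \sum_(w : t.-tuple ('I_n * 'I_n) | all (fun e => e \in edges adj) w) phi (Yaux g [::] k))); last first.
    by move=> e _; apply: eq_bigr => w _; rewrite take0.
  rewrite (eq_bigr _ (fun e _ => IH0)) sumr_const subn0 subn0 exprS.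
  by rewrite -[RHS]mulrA mulr_natl.
rewrite sum_tuple_cons subSS.
have H : forall e : 'I_n * 'I_n, \sum_(w : t.-tuple ('I_n * 'I_n) | all (fun e => e \in edges adj) w)
      phi (Yaux g (take s.+1 [tuple of e :: w]) k) =
   (#|edges adj|%:R)^+(t - s) *
     \sum_i ((((#|edges adj|%:R : R) *: W1 R adj) ^+ s) i k * phi (g (tperm e.1 e.2 i))).
  by move=> e; rewrite -(IH s (swapY g e) Hs).
rewrite (eq_bigr _ (fun e _ => H e)).
rewrite -mulr_sumr; congr (_ * _).
rewrite exchange_big /=.
under eq_bigr => i _ do rewrite -mulr_sumr (@edge_sum _ _ _ (fun j => phi (g j)) i sym) -(@W1_sum _ _ _ _ _ sym E0).
rewrite exprS -mulmxE.
under [RHS]eq_bigr => j _ do rewrite mxE mulr_suml.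
rewrite [RHS]exchange_big /=; apply: eq_bigr => i _.
rewrite mulr_sumr; apply: eq_bigr => j _.
by rewrite mulrCA mulrA.
Qed.

Lemma scaleX_mx (R : realFieldType) n (c : R) (A : 'M[R]_n) s :
  (c *: A) ^+ s = c ^+ s *: A ^+ s.
Proof.
elim: s => [|s IH]; first by rewrite !expr0 scale1r.
by rewrite !exprS IH -!mulmxE -scalemxAl -scalemxAr scalerA.
Qed.

Lemma Rprime_closed (R : realFieldType) n (X : 'I_n -> R) ws k t :
  Rprime X ws k t = (t%:R)^-1 *
    \sum_(0 <= s < t) ((Yaux X (take s ws) k < X k)%R)%:R.
Proof.
elim: t => [|t IH]; first by rewrite big_geq // mulr0.
rewrite /= IH big_nat_recr //=.
have Ht : (t.+1%:R : R) != 0 by rewrite pnatr_eq0.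
case: t IH Ht => [|t] IH Ht.
  by rewrite big_geq // invr1 subrr !mul0r !mul1r !add0r.
have Ht' : (t.+1%:R : R) != 0 by rewrite pnatr_eq0.
rewrite -[(t.+2)%:R]natr1 in Ht *; field.
have := ler0n R t => ?; apply/andP; split; apply/eqP; lra.
Qed.

Theorem mainTheorem1 (R : realFieldType) (n : nat) (adj : rel 'I_n)
  (X : 'I_n -> R) :
  (2 <= n)%N ->
  simple_graph adj -> connected_graph adj -> ~ bipartite adj ->
  injective X ->
  forall (k : 'I_n) (t : nat), (1 <= t)%N ->
    expect adj t (fun ws => Rprime X ws k t)
      = (t%:R)^-1 * \sum_(0 <= s < t)
          (hvec X k *m (W1 R adj) ^+ s *m evec R k) 0 0
    /\ expect adj t (fun ws => Rrank X ws k t)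
      = n%:R * expect adj t (fun ws => Rprime X ws k t) + 1.
Proof.
move=> n2 [sym irr] conn _ _ k t t1.
have E0 : (#|edges adj|%:R : R) != 0.
  rewrite pnatr_eq0.
  have h0 : (0 < n)%N by apply: leq_trans n2.
  have h1 : (1 < n)%N by [].
  have /connectP[p pth lst] := conn (Ordinal h0) (Ordinal h1).
  case: p pth lst => [|y p] /=; first by move=> _ /(congr1 val).
  case/andP => a0y _ _.
  have ny : Ordinal h0 != y by apply/eqP => e; rewrite -e irr in a0y.
  have [e He] : exists e, e \in edges adj.
    exists (Ordinal h0, y); rewrite inE /= a0y andbT lt0n.
    apply: contra ny => /eqP y0; apply/eqP/val_inj; by rewrite /= y0.
  by apply/eqP => /card0_eq/(_ e); rewrite He.
have Et : (#|edges adj|%:R ^+ t : R) != 0 by rewrite expf_neq0.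
have cnt : \sum_(w : t.-tuple ('I_n * 'I_n) | all (fun e => e \in edges adj) w) (1 : R)
    = #|edges adj|%:R ^+ t.
  have := @marg R n adj (fun _ => 1) k sym E0 t 0 X (leq0n t).
  rewrite subn0 expr0 => ->.
  rewrite (bigD1 k) //= mxE eqxx mulr1 big1 ?addr0 ?mulr1 //.
  by move=> i /negbTE ik; rewrite mxE ik mul0r.
have P1 : expect adj t (fun ws => Rprime X ws k t)
      = (t%:R)^-1 * \sum_(0 <= s < t)
          (hvec X k *m (W1 R adj) ^+ s *m evec R k) 0 0.
  rewrite /expect.
  under eq_bigr => w _ do rewrite Rprime_closed.
  rewrite -mulr_sumr mulrCA; congr (_ * _).
  rewrite exchange_big /= mulr_sumr; apply: eq_big_nat => s /andP[_ st].
  rewrite (@marg R n adj (fun y => ((y < X k)%R)%:R) k sym E0 t s X (ltnW st)).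
  rewrite mulrA.
  have -> : (#|edges adj|%:R ^+ t)^-1 * #|edges adj|%:R ^+ (t - s) = ((#|edges adj|%:R : R) ^+ s)^-1.
    by rewrite -{1}(subnK (ltnW st)) exprD invfM mulrAC mulVf ?mul1r // expf_neq0.
  rewrite [RHS]mxE [RHS](bigD1 k) //= [X in _ = _ + X]big1 ?addr0; last first.
    by move=> j /negbTE jk; rewrite !mxE jk mulr0.
  rewrite !mxE !eqxx mulr1 mulr_sumr; apply: eq_bigr => i _.
  rewrite scaleX_mx !mxE mulrA mulrA mulVf ?mul1r ?expf_neq0 //.
  by rewrite mulrC.
split => //.
rewrite /expect /Rrank.
under eq_bigr => w _ do rewrite mulrC.
rewrite big_split /= -mulr_suml cnt mulrDr mulVf //.
by rewrite mulrA mulrC.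
Qed.
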